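(* Let $\varsigma=(\varsigma_1,\dots,\varsigma_K)\in\Gamma(\mathscr M_1)\oplus\dots\oplus\Gamma(\mathscr M_K)$. Then $\varsigma\in\pi(C(X))$ if and only if $\varsigma$ has the boundary decomposition property and, for every $k=1,\dots,K$ and every $x\in\overline{Y_k}$, $\varsigma_k(x)$ has a diagonal matrix representation, i.e. $\varsigma_k(x)$ maps $\mathscr V^{(i)}_x$ into itself for each $0\le i\le r_k-1$.
   Context: Let $X$ be an infinite compact metric space, $\alpha:X\to X$ a minimal homeomorphism, $\mathscr V$ a Hermitian complex line bundle over $X$, and $Y\subset X$ closed with non-empty interior. $\mathcal E=\Gamma(\mathscr V,\alpha)$ is the Hilbert $C(X)$-bimodule of continuous sections of $\mathscr V$ with right action $(\xi f)(x)=\xi(x)f(x)$, right inner product $\langle\xi(x),\eta(x)\rangle_{\mathscr V_x}$, left action $f\cdot\xi=\xi\,(f\circ\alpha)$; $\mathcal E_Y=C_0(X\setminus Y)\mathcal E$ and $\mathcal O(\mathcal E_Y)\supseteq C(X)$ is its Cuntz–Pimsner algebra. For $y\in Y$ let $r_Y(y)=\min\{n\ge1:\alpha^n(y)\in Y\}$, with distinct values $r_1<\dots<r_K$, and $Y_k=\{y\in Y:r_Y(y)=r_k\}$. Let $\mathscr V^{(0)}=X\times\mathbb C$, $\mathscr V^{(n)}=(\alpha^{n-1})^*\mathscr V\otimes\cdots\otimes\alpha^*\mathscr V\otimes\mathscr V$, so $\mathscr V^{(n)}_x=\mathscr V_{\alpha^{n-1}(x)}\otimes\cdots\otimes\mathscr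 V_x=\mathscr V^{(n-m)}_{\alpha^m(x)}\otimes\mathscr V^{(m)}_x$. Let $\mathscr D^{(n)}=\mathscr V^{(0)}\oplus\cdots\oplus\mathscr V^{(n-1)}$, $\mathscr M_k=\mathrm{End}(\mathscr D^{(r_k)})|_{\overline{Y_k}}$, $\Gamma(\mathscr M_k)$ its continuous sections. $\pi=\oplus_k\pi_k$ where $\pi_k:\mathcal O(\mathcal E_Y)\to\Gamma(\mathscr M_k)$ is the $*$-homomorphism with $\pi_k(f)(x)(a_0,\dots,a_{r_k-1})=(f(x)a_0,\dots,f(\alpha^{r_k-1}(x))a_{r_k-1})$ for $f\in C(X)$ and $\pi_k(\xi)(x)(a_0,\dots,a_{r_k-1})=(0,\xi(x)\otimes a_0,\dots,\xi(\alpha^{r_k-2}(x))\otimes a_{r_k-2})$ for $\xi\in\mathcal E_Y$, $x\in\overline{Y_k}$. Boundary decomposition property: for every $k$ and $x\in\overline{Y_k}\setminus Y_k$, with $t_1,\dots,t_m<k$ such that $r_{t_1}+\dots+r_{t_m}=r_k$ and $x\in Y_{t_1}\cap\alpha^{-r_{t_1}}(Y_{t_2})\cap\dots\cap\alpha^{-(r_{t_1}+\dots+r_{t_{m-1}})}(Y_{t_m})$, $R_0=0$, $R_s=r_{t_1}+\dots+r_{t_s}$, and the $s$-th component $\mathscr V^{(R_{s-1})}_x\oplus\dots\oplus\mathscr V^{(R_s-1)}_x$ of $\mathscr D^{(r_k)}_x$ identified with $\mathscr D^{(r_{t_s})}_{\alpha^{R_{s-1}}(x)}\otimes\mathscr V^{(R_{s-1})}_x$,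 $\varsigma_k(x)$ restricted to the $s$-th component equals $\varsigma_{t_s}(\alpha^{R_{s-1}}(x))\otimes\mathrm{id}_{\mathscr V^{(R_{s-1})}_x}$ for every $s$. *)

(* Defs.v *)
From HB Require Import structures.
From mathcomp Require Import all_boot all_order all_algebra.
From mathcomp Require Import all_classical all_reals.
From mathcomp Require Import topology normedtype.
From mathcomp.real_closed Require Import complex.

Set Implicit Arguments.
Unset Strict Implicit.
Unset Printing Implicit Defensive.

Import Order.TTheory GRing.Theory Num.Theory.
Import numFieldNormedType.Exports.
Local Open Scope classical_set_scope.
Local Open Scope ring_scope.

Section Defs.
Context {R : realType} {X : topologicalType}.

Definition ccont_within (D : set X) (f : X -> R[i]) : Prop :=
  {within D, continuous (fun x => complex.Re (f x))} /\
  {within D, continuous (fun x => complex.Im (f x))}.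

Definition homeomorphism (alpha beta : X -> X) : Prop :=
  [/\ continuous alpha, continuous beta, cancel alpha beta & cancel beta alpha].

Definition full_orbit (alpha beta : X -> X) (x : X) : set X :=
  [set iter n alpha x | n in [set: nat]] `|` [set iter n beta x | n in [set: nat]].

Definition minimal_homeo (alpha beta : X -> X) : Prop :=
  homeomorphism alpha beta /\
  forall x, closure (full_orbit alpha beta x) = [set: X].

(** First return time r_Y(y) = min {n >= 1 : alpha^n y \in Y}
    (set to 0 if there is no return; this never happens under the
    standing hypotheses). *)
Definition return_time (alpha : X -> X) (Y : set X) (y : X) : nat :=
  let P : pred nat := fun n => (0 < n)%N && `[< Y (iter n alpha y) >] in
  match pselect (exists n, P n) with
  | left h => ex_minn h
  | right _ => 0%N
  end.

(** Hermitian line bundle over X, presented by local trivializations: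
    an open cover (U a)_{a : A} and unitary transition functions g a b,
    continuous on U a ∩ U b, satisfying the cocycle identities.
    Convention: on U a ∩ U b the local unit frames satisfy
    e_b(x) = g a b x * e_a(x). *)
Definition hermitian_line_bundle (A : Type) (U : A -> set X)
    (g : A -> A -> X -> R[i]) : Prop :=
  (forall a, open (U a)) /\
  (forall x, exists a, U a x) /\
  (forall a b, ccont_within (U a `&` U b) (g a b)) /\
  (forall a b x, U a x -> U b x -> `|g a b x| = 1) /\
  (forall a x, U a x -> g a a x = 1) /\
  (forall a b c x, U a x -> U b x -> U c x -> g a b x * g b c x = g a c x).

(** A frame choice is a sequence of chart indices c : nat -> A; it is valid
    at x up to length n if alpha^l x \in U (c l) for l < n.  It gives the
    local frame e^{(m)}_c(x) = e_{c(m-1)}(alpha^{m-1} x) ⊗ ... ⊗ e_{c 0}(x)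
    of V^{(m)}_x for every m <= n, hence a frame of D^{(n)}_x. *)
Definition valid_frame (A : Type) (U : A -> set X) (alpha : X -> X)
    (n : nat) (c : nat -> A) (x : X) : Prop :=
  forall l, (l < n)%N -> U (c l) (iter l alpha x).

(** e^{(m)}_{c'}(x) = trans_factor c c' x m * e^{(m)}_c(x). *)
Definition trans_factor (A : Type) (g : A -> A -> X -> R[i]) (alpha : X -> X)
    (c c' : nat -> A) (x : X) (m : nat) : R[i] :=
  \prod_(l < m) g (c l) (c' l) (iter l alpha x).

(** Entry (i,j) of a square matrix, indexed by naturals (0 outside range). *)
Definition mxn (n : nat) (M : 'M[R[i]]_n) (i j : nat) : R[i] :=
  match insub i, insub j with
  | Some i', Some j' => M i' j'
  | _, _ => 0
  end.

(** A section of End(D^{(n)}) over a set Z is described by its matrices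
    S c x in every local frame c (entry (i,j) = coefficient of
    ς(x) e^{(j)}_c(x) along e^{(i)}_c(x)); only the values at x \in Z
    for frames c valid at x are meaningful. *)
Definition end_section (A : Type) (U : A -> set X) (g : A -> A -> X -> R[i])
    (alpha : X -> X) (n : nat) (Z : set X)
    (S : (nat -> A) -> X -> 'M[R[i]]_n) : Prop :=
  (forall c c' x, Z x -> valid_frame U alpha n c x -> valid_frame U alpha n c' x ->
     forall i j : 'I_n,
       S c' x i j = trans_factor g alpha c c' x j / trans_factor g alpha c c' x i
                    * S c x i j) /\
  (forall c (i j : 'I_n),
     ccont_within (Z `&` valid_frame U alpha n c) (fun x => S c x i j)).


Definition ccontinuous (f : X -> R[i]) : Prop :=
  continuous (fun x => complex.Re (f x)) /\ continuous (fun x => complex.Im (f x)).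

Definition Ysub (alpha : X -> X) (Y : set X) (n : nat) : set X :=
  Y `&` [set y | return_time alpha Y y = n].

(** R_s = r_{t_1} + ... + r_{t_s} (with the sequence t 0-indexed). *)
Definition partial_sum (K : nat) (r : 'I_K -> nat) (t : seq 'I_K) (s : nat) : nat :=
  (\sum_(u <- take s t) r u)%N.

(** The s-th component
    V^{(R_{s-1})}_x ⊕ ... ⊕ V^{(R_s - 1)}_x of D^{(r_k)}_x is identified with
    D^{(r_{t_s})}_{alpha^{R_{s-1}} x} ⊗ V^{(R_{s-1})}_x via
    e^{(R_{s-1}+l)}_c(x) = e^{(l)}_{c(R_{s-1} + .)}(alpha^{R_{s-1}} x) ⊗ e^{(R_{s-1})}_c(x). *)
Definition boundary_decomposition_property (A : Type) (U : A -> set X)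
    (alpha : X -> X) (Y : set X) (K : nat) (r : 'I_K -> nat)
    (sig : forall k : 'I_K, (nat -> A) -> X -> 'M[R[i]]_(r k)) : Prop :=
  forall (k : 'I_K) (x : X) (t : seq 'I_K),
    closure (Ysub alpha Y (r k)) x -> ~ Ysub alpha Y (r k) x ->
    all (fun u : 'I_K => (u < k)%N) t ->
    (\sum_(u <- t) r u)%N = r k ->
    (forall s, (s < size t)%N ->
       Ysub alpha Y (r (nth k t s)) (iter (partial_sum r t s) alpha x)) ->
    forall s, (s < size t)%N ->
    forall c, valid_frame U alpha (r k) c x ->
    forall i j : nat, (i < r k)%N ->
      (partial_sum r t s <= j < partial_sum r t s.+1)%N ->
      mxn (sig k c x) i j =
      if (partial_sum r t s <= i < partial_sum r t s.+1)%N then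
        mxn (sig (nth k t s) (fun l => c (partial_sum r t s + l)%N)
                 (iter (partial_sum r t s) alpha x))
            (i - partial_sum r t s) (j - partial_sum r t s)
      else 0.

Definition diagonal_property (A : Type) (U : A -> set X)
    (alpha : X -> X) (Y : set X) (K : nat) (r : 'I_K -> nat)
    (sig : forall k : 'I_K, (nat -> A) -> X -> 'M[R[i]]_(r k)) : Prop :=
  forall (k : 'I_K) (x : X) c,
    closure (Ysub alpha Y (r k)) x -> valid_frame U alpha (r k) c x ->
    forall i j : 'I_(r k), i != j -> sig k c x i j = 0.

Definition in_pi_CX (A : Type) (U : A -> set X)
    (alpha : X -> X) (Y : set X) (K : nat) (r : 'I_K -> nat)
    (sig : forall k : 'I_K, (nat -> A) -> X -> 'M[R[i]]_(r k)) : Prop :=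
  exists f : X -> R[i], ccontinuous f /\
    forall (k : 'I_K) (x : X) c,
      closure (Ysub alpha Y (r k)) x -> valid_frame U alpha (r k) c x ->
      sig k c x = \matrix_(i, j) (if i == j then f (iter i alpha x) else 0).

End Defs.

(* Main.v *)
Require Import Defs.
From HB Require Import structures.
From mathcomp Require Import all_boot all_order all_algebra.
From mathcomp Require Import all_classical all_reals.
From mathcomp Require Import topology normedtype.
From mathcomp.real_closed Require Import complex.
From mathcomp Require Import zify.
Import Order.TTheory GRing.Theory Num.Theory.
Import numFieldNormedType.Exports.
Local Open Scope classical_set_scope.
Local Open Scope ring_scope.

Set Implicit Arguments.
Unset Strict Implicit.
Unset Printing Implicit Defensive.

Lemma iter_can (T : Type) (f h : T -> T) : cancel f h ->
  forall n x, iter n h (iter n f x) = x.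
Proof. by move=> fK; elim=> [|n IH] x //; rewrite iterSr iterS fK IH. Qed.

Lemma iter_can_sub (T : Type) (f h : T -> T) : cancel f h ->
  forall m n x, (n <= m)%N -> iter n h (iter m f x) = iter (m - n) f x.
Proof.
move=> fK m n x nm; rewrite -{1}(subnKC nm) iterD.
by rewrite (iter_can fK).
Qed.

Section Top.
Variables (X : topologicalType).

Lemma iter_cont (f : X -> X) : continuous f -> forall n, continuous (iter n f).
Proof.
move=> cf; elim=> [|n IH] x /=; first exact: cvg_id.
exact: (continuous_comp (IH x) (cf _)).
Qed.

Variables (alpha beta : X -> X) (Y : set X).

Definition rt := return_time alpha Y.

Lemma rt_spec y :
  (rt y = 0%N /\ forall n, (0 < n)%N -> ~ Y (iter n alpha y)) \/
  [/\ (0 < rt y)%N, Y (iter (rt y) alpha y) &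
      forall m, (0 < m < rt y)%N -> ~ Y (iter m alpha y)].
Proof.
rewrite /rt /return_time; case: pselect => [h|nh].
  right; case: ex_minnP => m /andP[m0 /asboolP Ym] minm; split => //.
  move=> k /andP[k0 km] Yk.
  have := minm k (introT andP (conj k0 (asboolT Yk))).
  by rewrite leqNgt km.
left; split => // n n0 Yn; apply: nh; exists n.
by rewrite n0; apply/asboolP.
Qed.

Lemma rt_char y n : (0 < n)%N -> Y (iter n alpha y) ->
  (forall m, (0 < m < n)%N -> ~ Y (iter m alpha y)) -> rt y = n.
Proof.
move=> n0 Yn minn; case: (rt_spec y) => [[_ H]|[r0 Yr minr]].
  by case: (H n n0).
apply/eqP; rewrite eqn_leq; apply/andP; split.
  rewrite leqNgt; apply/negP => nr; apply: (minr n) => //; by rewrite n0.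
rewrite leqNgt; apply/negP => rn; apply: (minn (rt y)) => //; by rewrite r0.
Qed.

Lemma Ysub_ret n y : Ysub alpha Y n y -> Y y /\ Y (iter n alpha y).
Proof.
move=> [Yy /= ry]; split => //; case: n ry => [|n] ry //.
move: (rt_spec y); rewrite /rt ry => -[[//]|[_ Yr _]] //.
Qed.

Hypothesis (ca : continuous alpha) (Yc : closed Y).

Lemma closure_Ysub_ret n y : closure (Ysub alpha Y n) y -> Y y /\ Y (iter n alpha y).
Proof.
have cC : closed (Y `&` (iter n alpha) @^-1` Y).
  apply: closedI => //; apply: preimage_closed => // z _; exact: iter_cont.
move=> /(closureS (fun z => Ysub_ret (n := n) (y := z))).
by move: cC; rewrite closure_id => <-.
Qed.

End Top.
Lemma recur_bound (X : topologicalType) (alpha beta : X -> X) (W : set X) :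
  compact [set: X] -> continuous alpha -> continuous beta -> open W ->
  (forall x, exists n, W (iter n alpha x) \/ W (iter n beta x)) ->
  exists N, forall z, exists n, (n <= N)%N /\ (W (iter n alpha z) \/ W (iter n beta z)).
Proof.
move=> cX ca cb oW hit.
have := (compact_near_coveringP _).1 cX nat \oo
  (fun N z => exists n, (n <= N)%N /\ (W (iter n alpha z) \/ W (iter n beta z))) _.
case.
- move=> x _; have [n hn] := hit x.
  have nb : nbhs x ((iter n alpha) @^-1` W `|` (iter n beta) @^-1` W).
    case: hn => hn.
      have h1 : nbhs x ((iter n alpha) @^-1` W).
        have := @iter_cont _ _ ca n x; move=> /(_ W) /=; by apply; apply: open_nbhs_nbhs; split.
      by apply: filterS h1 => z; left.
    have h1 : nbhs x ((iter n beta) @^-1` W).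
      have := @iter_cont _ _ cb n x; move=> /(_ W) /=; by apply; apply: open_nbhs_nbhs; split.
    by apply: filterS h1 => z; right.
  exists (iter n alpha @^-1` W `|` iter n beta @^-1` W, [set N | (n <= N)%N]); first by split => //; exists n.
  by move=> [x' N] /= [Ux' nN]; exists n; split.
- move=> N _ HN; exists N => z; exact: HN N (leqnn N) z I.
Qed.

Section Dyn.
Variables (R : realType) (X : metricType R) (alpha beta : X -> X).
Hypotheses (ca : continuous alpha) (cb : continuous beta)
  (ab : cancel alpha beta) (ba : cancel beta alpha).
Hypothesis (cX : compact [set: X]).
Hypothesis (minX : forall x, closure (full_orbit alpha beta x) = [set: X]).
Variables (Y : set X).
Hypotheses (Yc : closed Y) (Yi : Y° !=set0).

Let hit x : exists n, Y° (iter n alpha x) \/ Y° (iter n beta x).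
Proof.
case: Yi => w Ww.
have : closure (full_orbit alpha beta x) w by rewrite minX.
move=> /(_ (Y°)) []; first by apply: open_nbhs_nbhs; split => //; exact: open_interior.
move=> z [[[n _ <-]|[n _ <-]] Wz]; exists n; by [left|right].
Qed.

Let bound : exists N, forall z, exists n, (n <= N)%N /\ (Y° (iter n alpha z) \/ Y° (iter n beta z)).
Proof. apply: recur_bound => //; exact: open_interior. Qed.

Lemma fwd x : exists2 n, (0 < n)%N & Y (iter n alpha x).
Proof.
have [N HN] := bound; have [n [nN [h|h]]] := HN (iter N.+1 alpha x).
  exists (n + N.+1)%N; first by rewrite addnS.
  by rewrite iterD; exact: interior_subset.
exists (N.+1 - n)%N; first by rewrite subn_gt0 ltnS.
rewrite -(iter_can_sub ab) //; first exact: interior_subset.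
exact: leqW.
Qed.

Lemma bwd x : exists m, Y (iter m beta x).
Proof.
have [N HN] := bound; have [n [nN [h|h]]] := HN (iter N beta x).
  exists (N - n)%N; rewrite -(iter_can_sub ba) //; exact: interior_subset.
exists (n + N)%N; rewrite iterD; exact: interior_subset.
Qed.

Lemma genuine_exists x : exists i y, [/\ Y y, (i < rt alpha Y y)%N & iter i alpha y = x].
Proof.
have [m0 Ym0] := bwd x.
have ex : exists m, (fun m => `[< Y (iter m beta x) >]) m by exists m0; apply/asboolP.
case: (ex_minnP ex) => m /asboolP Ym minm.
exists m, (iter m beta x); split => //; last exact: iter_can.
case: (rt_spec alpha Y (iter m beta x)) => [[_ H]|[r0 Yr minr]].
  by have [n n0 Yn] := fwd (iter m beta x); case: (H n n0).
rewrite ltnNge; apply/negP => rm.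
move: Yr; rewrite (iter_can_sub ba) // => Yr.
have := minm _ (asboolT Yr); rewrite leqNgt; apply/negP.
lia.
Qed.

Lemma genuine_uniq i1 y1 i2 y2 : Y y1 -> Y y2 ->
  (i1 < rt alpha Y y1)%N -> (i2 < rt alpha Y y2)%N ->
  iter i1 alpha y1 = iter i2 alpha y2 -> i1 = i2 /\ y1 = y2.
Proof.
wlog le12 : i1 y1 i2 y2 / (i1 <= i2)%N.
  move=> H Y1 Y2 h1 h2 e; case: (leqP i1 i2) => le; first exact: H.
  by have [-> ->] := H i2 y2 i1 y1 (ltnW le) Y2 Y1 h2 h1 (esym e).
move=> Y1 Y2 h1 h2 e.
have ey1 : y1 = iter (i2 - i1) alpha y2.
  by rewrite -(iter_can_sub ab) // -e iter_can.
case: (posnP (i2 - i1)) => d0.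
  split; last by rewrite ey1 d0.
  by apply/eqP; rewrite eqn_leq le12 -subn_eq0 d0.
case: (rt_spec alpha Y y2) => [[r0 _]|[r0 Yr minr]]; first by rewrite r0 in h2.
have c : (0 < i2 - i1 < rt alpha Y y2)%N by lia.
by exfalso; apply: (minr _ c); rewrite -ey1.
Qed.

End Dyn.


Set Implicit Arguments.
Set Implicit Arguments.
Unset Strict Implicit.
Unset Printing Implicit Defensive.

Section PS.
Variables (K : nat) (r : 'I_K -> nat).

Lemma ps0 t : partial_sum r t 0 = 0%N.
Proof. by rewrite /partial_sum take0 big_nil. Qed.

Lemma ps_cons u t s : partial_sum r (u :: t) s.+1 = (r u + partial_sum r t s)%N.
Proof. by rewrite /partial_sum /= big_cons. Qed.

Lemma ps_S d t s : (s < size t)%N ->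
  partial_sum r t s.+1 = (partial_sum r t s + r (nth d t s))%N.
Proof.
elim: t s => [|u t IH] [|s] //= hs.
  by rewrite ps_cons ps0 /partial_sum take0 big_nil addn0.
by rewrite !ps_cons IH // addnA.
Qed.

Lemma ps_le t s : (partial_sum r t s <= \sum_(u <- t) r u)%N.
Proof.
elim: t s => [|u t IH] [|s]; rewrite ?ps0 //.
by rewrite ps_cons big_cons leq_add2l.
Qed.

Lemma block t i : (i < \sum_(u <- t) r u)%N ->
  exists2 s, (s < size t)%N &
    (partial_sum r t s <= i < partial_sum r t s.+1)%N.
Proof.
elim: t i => [|u t IH] i; first by rewrite big_nil.
rewrite big_cons => hi; case: (ltnP i (r u)) => iu.
  by exists 0%N => //; rewrite ps0 ps_cons ps0 addn0.
have [s hs hb] : exists2 s, (s < size t)%N &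
    (partial_sum r t s <= i - r u < partial_sum r t s.+1)%N.
  by apply: IH; lia.
exists s.+1 => //; rewrite !ps_cons; lia.
Qed.

Lemma mem_le_sum t u : u \in t -> (r u <= \sum_(v <- t) r v)%N.
Proof.
elim: t => [|v t IH] //; rewrite inE big_cons => /orP[/eqP ->|/IH]; lia.
Qed.

Variables (X : topologicalType) (alpha : X -> X) (Y : set X).
Hypothesis r_vals : forall n : nat,
     (exists2 y, Y y & return_time alpha Y y = n) <-> (exists k : 'I_K, r k = n).

Lemma decomp n : forall y, Y y -> Y (iter n alpha y) ->
  exists t : seq 'I_K, [/\ (\sum_(u <- t) r u)%N = n,
    forall u, u \in t -> (r u < n)%N \/ t = [:: u],
    forall u, u \in t -> (0 < r u)%N &
    forall d s, (s < size t)%N ->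
      Ysub alpha Y (r (nth d t s)) (iter (partial_sum r t s) alpha y)].
Proof.
elim/ltn_ind: n => n IH y Yy Yn.
case: (posnP n) => n0.
  by exists [::]; split => //; rewrite n0 big_nil.
case: (rt_spec alpha Y y) => [[_ H]|[r0 Yr minr]]; first by case: (H n n0).
have rn : (rt alpha Y y <= n)%N.
  rewrite leqNgt; apply/negP => nr; by apply: (minr n) => //; rewrite n0.
have [k rk] := (r_vals (rt alpha Y y)).1 (ex_intro2 _ _ y Yy erefl).
have Y' : Y (iter (n - rt alpha Y y) alpha (iter (rt alpha Y y) alpha y)).
  by rewrite -iterD subnK.
have [|t' [s' hb' hp' hY']] := IH (n - rt alpha Y y)%N _ _ Yr Y'.
  lia.
exists (k :: t'); split.
- by rewrite big_cons s' rk subnKC.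
- move=> u; rewrite inE => /orP[/eqP ->|ut'].
    case: (ltnP (r k) n) => kn; first by left.
    right; case: t' s' hb' hp' hY' => // v t'' s' _ hp' _.
    have := hp' v; rewrite inE eqxx => /(_ isT).
    rewrite big_cons in s'; lia.
  left; have := mem_le_sum ut'; rewrite s'; lia.
- move=> u; rewrite inE => /orP[/eqP ->|/hp' //]; by rewrite rk.
- move=> d [|s] /= hs.
    by rewrite ps0 /=; split => //; rewrite /= rk.
  by rewrite ps_cons addnC iterD rk; apply: hY'.
Qed.

End PS.


Set Implicit Arguments.
Set Implicit Arguments.
Unset Strict Implicit.
Unset Printing Implicit Defensive.

Lemma mxnE (R : realType) n (M : 'M[R[i]]_n) i j (hi : (i < n)%N) (hj : (j < n)%N) :
  mxn M i j = M (Ordinal hi) (Ordinal hj).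
Proof. by rewrite /mxn (insubT (fun i => i < n)%N hi) (insubT (fun i => i < n)%N hj). Qed.

Lemma paste_list (T V : topologicalType) (I : eqType) (P : I -> set T) (h : T -> V)
  (s : seq I) : (forall p, p \in s -> closed (P p)) ->
  (forall p, p \in s -> {within P p, continuous h}) ->
  closed [set z | exists2 p, p \in s & P p z] /\
  {within [set z | exists2 p, p \in s & P p z], continuous h}.
Proof.
elim: s => [|q s IH] cl ct.
  have -> : [set z | exists2 p, p \in [::] & P p z] = set0.
    by apply/seteqP; split => z //= [].
  by split; [exact: closed0 | exact: continuous_subspace0].
have -> : [set z | exists2 p, p \in q :: s & P p z] =
    P q `|` [set z | exists2 p, p \in s & P p z].
  apply/seteqP; split => z /=.
    by move=> [p]; rewrite inE => /orP[/eqP -> | ps] Pz; [left | right; exists p].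
  by case => [Pz|[p ps Pz]]; [exists q; rewrite ?inE ?eqxx | exists p; rewrite // inE ps orbT].
have sub p : p \in s -> p \in q :: s by move=> ps; rewrite inE ps orbT.
have [cl' ct'] := IH (fun p ps => cl p (sub p ps)) (fun p ps => ct p (sub p ps)).
have clq := cl q (mem_head q s).
split; first exact: closedU.
exact: withinU_continuous (ct q (mem_head q s)) ct'.
Qed.

Section Main.
Variables (R : realType) (X : metricType R) (alpha beta : X -> X).
Hypotheses (ca : continuous alpha) (cb : continuous beta)
  (ab : cancel alpha beta) (ba : cancel beta alpha).
Hypothesis (cX : compact [set: X]).
Hypothesis (minX : forall x, closure (full_orbit alpha beta x) = [set: X]).
Variables (A : Type) (U : A -> set X) (g : A -> A -> X -> R[i]).
Hypothesis V_bundle : hermitian_line_bundle U g.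
Variables (Y : set X).
Hypotheses (Yc : closed Y) (Yi : Y° !=set0).
Variables (K : nat) (r : 'I_K -> nat).
Hypothesis r_incr : forall k l : 'I_K, (k < l)%N -> (r k < r l)%N.
Hypothesis r_vals : forall n : nat,
     (exists2 y, Y y & return_time alpha Y y = n) <-> (exists k : 'I_K, r k = n).
Variable sig : forall k : 'I_K, (nat -> A) -> X -> 'M[R[i]]_(r k).
Hypothesis sig_sect : forall k : 'I_K,
     end_section U g alpha (closure (Ysub alpha Y (r k))) (sig k).

Lemma r_inj : injective r.
Proof.
move=> k l e; apply: val_inj => /=.
case: (ltngtP k l) => // h; [have := r_incr h | have := r_incr h]; rewrite e ltnn //.
Qed.

Lemma r_lt k l : (r k < r l)%N -> (k < l)%N.
Proof.
move=> h; case: (ltngtP k l) => // h'.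
  by have := r_incr h'; lia.
have e : k = l by apply: val_inj.
by move: h; rewrite e ltnn.
Qed.

Lemma valid_ex n y : exists c, valid_frame U alpha n c y.
Proof.
case: V_bundle => _ [cov _].
have [c hc] := choice (fun l => cov (iter l alpha y)).
by exists c => l _.
Qed.

Definition dval k c y i := mxn (sig k c y) i i.

Lemma dval_frame k c c' y i : closure (Ysub alpha Y (r k)) y ->
  valid_frame U alpha (r k) c y -> valid_frame U alpha (r k) c' y ->
  (i < r k)%N -> dval k c y i = dval k c' y i.
Proof.
move=> cl vc vc' hi; rewrite /dval !(mxnE _ hi hi).
rewrite ((sig_sect k).1 c c' y cl vc vc') divff ?mul1r //.
case: V_bundle => _ [_ [_ [nrm _]]].
apply/prodf_neq0 => l _; apply/eqP => e.
have := nrm (c l) (c' l) (iter l alpha y) (vc l (ltn_trans (ltn_ord l) hi))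
  (vc' l (ltn_trans (ltn_ord l) hi)).
by rewrite e normr0 => /eqP; rewrite eq_sym oner_eq0.
Qed.


Section Conv.
Hypothesis bdp : boundary_decomposition_property U alpha Y sig.
Hypothesis dg : diagonal_property U alpha Y sig.

Definition Sval x : set R[i] := [set v | exists k i y c,
  [/\ closure (Ysub alpha Y (r k)) y, (i < r k)%N, iter i alpha y = x,
      valid_frame U alpha (r k) c y & v = dval k c y i]].

Lemma reduce x v : Sval x v -> exists k i y c,
  [/\ Ysub alpha Y (r k) y, (i < r k)%N, iter i alpha y = x,
      valid_frame U alpha (r k) c y & v = dval k c y i].
Proof.
move=> [k [i [y [c [cl hi ex vc ->]]]]].
case: (pselect (Ysub alpha Y (r k) y)) => gen; first by exists k, i, y, c.
have [Yy Yr] := closure_Ysub_ret ca Yc cl.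
have [t [sum_t one_t pos_t Yt]] := decomp r_vals Yy Yr.
have ltk : all (fun u : 'I_K => (u < k)%N) t.
  apply/allP => u ut; apply: r_lt; case: (one_t u ut) => // et.
  exfalso; apply: gen.
  have := Yt u 0%N; rewrite et /= ps0 /= => /(_ isT).
  by move: sum_t; rewrite et big_cons big_nil addn0 => ->.
have hi' : (i < \sum_(u <- t) r u)%N by rewrite sum_t.
have [s hs hb] := block hi'.
have hRS := ps_S r k hs.
have hle := ps_le r t s.+1.
rewrite sum_t in hle.
have vc' : valid_frame U alpha (r (nth k t s)) (fun l => c (partial_sum r t s + l)%N)
    (iter (partial_sum r t s) alpha y).
  move=> l hl; rewrite -iterD addnC; apply: vc; lia.
have e := bdp cl gen ltk sum_t (fun s0 h0 => Yt k s0 h0) hs vc hi hb.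
rewrite hb in e.
exists (nth k t s), (i - partial_sum r t s)%N, (iter (partial_sum r t s) alpha y),
  (fun l => c (partial_sum r t s + l)%N); split.
- exact: Yt.
- lia.
- by rewrite -iterD subnK //; case/andP: hb.
- exact: vc'.
- by rewrite /dval e.
Qed.

Lemma Sval_uniq x v1 v2 : Sval x v1 -> Sval x v2 -> v1 = v2.
Proof.
move=> /reduce [k1 [i1 [y1 [c1 [[Y1 rt1] h1 e1 vc1 ->]]]]].
move=> /reduce [k2 [i2 [y2 [c2 [[Y2 rt2] h2 e2 vc2 ->]]]]].
have h1' : (i1 < rt alpha Y y1)%N by rewrite /rt rt1.
have h2' : (i2 < rt alpha Y y2)%N by rewrite /rt rt2.
have [ei ey] := genuine_uniq ab Y1 Y2 h1' h2' (etrans e1 (esym e2)).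
subst i2 y2.
have ek : k1 = k2 by apply: r_inj; rewrite -rt1 -rt2.
subst k2; have gen1 : Ysub alpha Y (r k1) y1 by split.
by apply: dval_frame => //; apply: subset_closure.
Qed.

Definition fpi x := xget 0 (Sval x).

Lemma fE x v : Sval x v -> fpi x = v.
Proof. by move=> h; apply: (Sval_uniq (xgetPex 0 (ex_intro _ v h)) h). Qed.

Lemma Sval_in k c y i : closure (Ysub alpha Y (r k)) y ->
  valid_frame U alpha (r k) c y -> (i < r k)%N ->
  Sval (iter i alpha y) (dval k c y i).
Proof. by move=> cl vc hi; exists k, i, y, c. Qed.

Lemma pieces_cover z : exists k i, (i < r k)%N /\ closure (Ysub alpha Y (r k)) (iter i beta z).
Proof.
have [i [y [Yy hi <-]]] := genuine_exists ca cb ab ba cX minX Yi z.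
have [k rk] := (r_vals (rt alpha Y y)).1 (ex_intro2 _ _ y Yy erefl).
exists k, i; rewrite rk iter_can //; split => //.
by apply: subset_closure; split.
Qed.

Lemma conv_matrix k x c : closure (Ysub alpha Y (r k)) x ->
  valid_frame U alpha (r k) c x ->
  sig k c x = \matrix_(i, j) (if i == j then fpi (iter i alpha x) else 0).
Proof.
move=> cl vc; apply/matrixP => i j; rewrite mxE; case: eqP => [<-|ne].
  rewrite (fE (Sval_in cl vc (ltn_ord i))) /dval (mxnE _ (ltn_ord i) (ltn_ord i)).
  by congr (sig k c x _ _); apply: val_inj.
by apply: dg => //; apply/eqP.
Qed.


Lemma valid_nbhs n c y : valid_frame U alpha n c y -> nbhs y (valid_frame U alpha n c).
Proof.
elim: n => [|n IH] v.
  by apply: filterS filterT => z _ l; rewrite ltn0.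
have v' : valid_frame U alpha n c y by move=> l hl; apply: v; lia.
have h1 := IH v'.
have h2 : nbhs y ((iter n alpha) @^-1` U (c n)).
  have := @iter_cont _ _ ca n y; move=> /(_ (U (c n))) /=; apply.
  apply: open_nbhs_nbhs; split; first by case: V_bundle.
  exact: v.
apply: filterS (filterI h1 h2) => z [vz uz] l hl.
case: (ltngtP l n) => hln; [exact: vz | lia | by rewrite hln].
Qed.

Lemma piece_cont (proj : R[i] -> R)
  (hp : forall k c (i' : 'I_(r k)),
     {within closure (Ysub alpha Y (r k)) `&` valid_frame U alpha (r k) c,
       continuous (fun y => proj (sig k c y i' i'))})
  k i (hi : (i < r k)%N) :
  {within [set z | closure (Ysub alpha Y (r k)) (iter i beta z)],
    continuous (fun z => proj (fpi z))}.
Proof.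
apply/subspace_continuousP => z0 Pz0.
have [c vc] := valid_ex (r k) (iter i beta z0).
pose i' := Ordinal hi.
pose F := fun y => proj (sig k c y i' i').
have hz : forall z, closure (Ysub alpha Y (r k)) (iter i beta z) ->
    valid_frame U alpha (r k) c (iter i beta z) -> proj (fpi z) = F (iter i beta z).
  move=> z cz vz; rewrite -{1}(iter_can ba i z) (fE (Sval_in cz vz hi)).
  by rewrite /dval (mxnE _ hi hi).
have Fc := (subspace_continuousP _ _).1 (hp k c i') (iter i beta z0) (conj Pz0 vc).
rewrite /from_subspace /= hz //.
move=> B nB; have := Fc B nB.
move=> h1.
have h1' : nbhs z0 ((iter i beta) @^-1`
    [set y | (closure (Ysub alpha Y (r k)) `&` valid_frame U alpha (r k) c) y -> B (F y)]).
  by have := @iter_cont _ _ cb i z0; move=> /(_ _ h1).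
have h2 : nbhs z0 ((iter i beta) @^-1` valid_frame U alpha (r k) c).
  by have := @iter_cont _ _ cb i z0; move=> /(_ _ (valid_nbhs vc)).
apply: filterS (filterI h1' h2) => z [hz1 hz2] Pz /=.
by rewrite hz //; apply: hz1.
Qed.


Lemma fpi_cont_proj (proj : R[i] -> R)
  (hp : forall k c (i' : 'I_(r k)),
     {within closure (Ysub alpha Y (r k)) `&` valid_frame U alpha (r k) c,
       continuous (fun y => proj (sig k c y i' i'))}) :
  continuous (fun z => proj (fpi z)).
Proof.
pose N := (\sum_(k < K) r k)%N.
pose s := [seq (k, i) | k <- enum 'I_K, i <- iota 0 N].
pose P := fun p : 'I_K * nat => if (p.2 < r p.1)%N then
  [set z | closure (Ysub alpha Y (r p.1)) (iter p.2 beta z)] else set0.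
have H1 : forall p, p \in s -> closed (P p).
  move=> p _; rewrite /P; case: ifP => _; last exact: closed0.
  apply: (@preimage_closed _ _ (iter p.2 beta)); last exact: closed_closure.
  move=> z _; exact: iter_cont.
have H2 : forall p, p \in s -> {within P p, continuous (fun z => proj (fpi z))}.
  move=> p _; rewrite /P; case: ifP => hi; last exact: continuous_subspace0.
  exact: piece_cont.
have [_ ct] := paste_list H1 H2.
apply/continuous_subspace_setT.
have -> : [set: X] = [set z | exists2 p, p \in s & P p z]; last exact: ct.
apply/seteqP; split => z // _.
have [k [i [hi cz]]] := pieces_cover z.
exists (k, i); last by rewrite /P /= hi.
apply: allpairs_f; first by rewrite mem_enum.
rewrite mem_iota /= add0n; apply: (leq_trans hi).
by rewrite /N (bigD1 k) //= leq_addr.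
Qed.

Lemma fpi_ccont : ccontinuous fpi.
Proof.
split.
  apply: fpi_cont_proj => k c i'; exact: ((sig_sect k).2 c i' i').1.
apply: fpi_cont_proj => k c i'; exact: ((sig_sect k).2 c i' i').2.
Qed.

End Conv.


Lemma fwd_dir : in_pi_CX U alpha Y sig ->
  boundary_decomposition_property U alpha Y sig /\ diagonal_property U alpha Y sig.
Proof.
move=> [f [_ hf]]; split.
- move=> k x t cl gen ltk sum_t Yt s hs c vc i j hi hj.
  have hRS : partial_sum r t s.+1 = (partial_sum r t s + r (nth k t s))%N by apply: ps_S.
  have hle := ps_le r t s.+1.
  rewrite sum_t in hle.
  have hjk : (j < r k)%N by lia.
  rewrite (hf k x c cl vc) (mxnE _ hi hjk) mxE /=.
  have -> : (Ordinal hi == Ordinal hjk) = (i == j) by [].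
  have vc' : valid_frame U alpha (r (nth k t s)) (fun l => c (partial_sum r t s + l)%N)
      (iter (partial_sum r t s) alpha x).
    move=> l hl; rewrite -iterD addnC; apply: vc; lia.
  have cl' := subset_closure (Yt s hs).
  have hj' : (j - partial_sum r t s < r (nth k t s))%N by lia.
  case: ifP => [/eqP eij | nij].
    subst j; case: ifP => hb; last by rewrite hj in hb.
    rewrite (hf _ _ _ cl' vc') (mxnE _ hj' hj') mxE /= eqxx.
    by rewrite -iterD subnK //; lia.
  case: ifP => hb //.
  have hi' : (i - partial_sum r t s < r (nth k t s))%N by lia.
  rewrite (hf _ _ _ cl' vc') (mxnE _ hi' hj') mxE /=.
  have -> : (Ordinal hi' == Ordinal hj') = (i - partial_sum r t s == j - partial_sum r t s)%N by [].
  case: eqP => // e; exfalso; move/negbT/eqP: nij; apply; lia.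
- move=> k x c cl vc i j ne; rewrite (hf k x c cl vc) mxE.
  by rewrite (negbTE ne).
Qed.

Lemma main_iff : in_pi_CX U alpha Y sig <->
  boundary_decomposition_property U alpha Y sig /\ diagonal_property U alpha Y sig.
Proof.
split; first exact: fwd_dir.
move=> [bdp dg]; exists fpi; split; first exact: (fpi_ccont bdp).
move=> k x c cl vc; exact: (conv_matrix bdp dg).
Qed.

End Main.

Unset Implicit Arguments.

Theorem corollary8p4
  (R : realType) (X : metricType R)
  (X_compact : compact [set: X]) (X_infinite : infinite_set [set: X])
  (alpha beta : X -> X) (alpha_min : minimal_homeo alpha beta)
  (A : Type) (U : A -> set X) (g : A -> A -> X -> R[i])
  (V_bundle : hermitian_line_bundle U g)
  (Y : set X) (Y_closed : closed Y) (Y_int : interior Y !=set0)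
  (K : nat) (r : 'I_K -> nat)
  (r_incr : forall k l : 'I_K, (k < l)%N -> (r k < r l)%N)
  (r_vals : forall n : nat,
     (exists2 y, Y y & return_time alpha Y y = n) <-> (exists k : 'I_K, r k = n))
  (sig : forall k : 'I_K, (nat -> A) -> X -> 'M[R[i]]_(r k))
  (sig_sect : forall k : 'I_K,
     end_section U g alpha (closure (Ysub alpha Y (r k))) (sig k)) :
  in_pi_CX U alpha Y sig <->
  boundary_decomposition_property U alpha Y sig /\ diagonal_property U alpha Y sig.
Proof.
case: alpha_min => [[ca cb ab ba] minX].
exact: (main_iff ca cb ab ba X_compact minX V_bundle Y_closed Y_int r_incr r_vals sig_sect).
Qed.
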